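(* Let $\epsilon>0$ and $n=(4+\epsilon)f$. Let $[n]$ be partitioned into sets $B$ with $|B|\le f$ and $G=[n]\setminus B$, and let $w_i\in[0,1]$ for $i\in[n]$ satisfy \[\sum_{i\in G}(1-w_i)\le\sum_{i\in B}(1-w_i)+\epsilon^2f/8.\] Let $\rho\ge0$ be defined by $\sum_{i\in B}w_i=(1-\rho)f$. Then: (1) for any $\hat G\subseteq G$ with $|\hat G|=n-2f$, $\sum_{i\in\hat G}w_i^2\ge(1-\max\{\rho/2,\epsilon/8\})^2(n-2f)$; (2) $\sum_{(i\neq j)\in B^2}w_iw_j\le(1-\rho)^2f^2$ and $(1-\rho)^2f\le\sum_{i\in B}w_i^2\le(1-\rho)f$.
   Context: The sum $\sum_{(i\neq j)\in B^2}$ ranges over ordered pairs of distinct elements of $B$. *)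

(* Defs.v *)
From mathcomp Require Import all_boot all_order all_algebra.

(* Main.v *)
From mathcomp Require Import all_boot all_order all_algebra.
From mathcomp Require Import ring lra.
Import Order.TTheory GRing.Theory Num.Theory.
Local Open Scope ring_scope.

Lemma sub_sum (R : realFieldType) (I : finType) (A C : {set I}) (F : I -> R) :
  A \subset C -> (forall i, i \in C -> 0 <= F i) ->
  \sum_(i in A) F i <= \sum_(i in C) F i.
Proof.
move=> sAC F0; rewrite [X in _ <= X](big_setID A) /=.
have -> : C :&: A = A by apply/setIidPr.
rewrite lerDl; apply: sumr_ge0 => i; rewrite inE => /andP[_ ?]; exact: F0.
Qed.

Lemma sq_lb (R : realFieldType) (I : finType) (A : {set I}) (w : I -> R) (a : R) :
  2 * a * \sum_(i in A) w i - a ^+ 2 * #|A|%:R <= \sum_(i in A) w i ^+ 2.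
Proof.
rewrite mulr_sumr.
have -> : a ^+ 2 * #|A|%:R = \sum_(i in A) a ^+ 2 by rewrite sumr_const mulr_natr.
rewrite -sumrB; apply: ler_sum => i _.
have : 0 <= (w i - a) ^+ 2 by apply: sqr_ge0.
lra.
Qed.

Theorem lemma4 (R : realFieldType) (eps : R) (n f : nat)
    (B : {set 'I_n}) (w : 'I_n -> R) (rho : R) :
  0 < eps -> eps <= 8 ->
  n%:R = (4 + eps) * f%:R ->
  (#|B| <= f)%N ->
  (forall i, 0 <= w i <= 1) ->
  \sum_(i in ~: B) (1 - w i) <= \sum_(i in B) (1 - w i) + eps ^+ 2 * f%:R / 8 ->
  0 <= rho ->
  \sum_(i in B) w i = (1 - rho) * f%:R ->
  (forall Ghat : {set 'I_n}, Ghat \subset ~: B -> #|Ghat| = (n - 2 * f)%N ->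
     (1 - Num.max (rho / 2) (eps / 8)) ^+ 2 * (n%:R - 2 * f%:R)
       <= \sum_(i in Ghat) w i ^+ 2) /\
  (\sum_(i in B) \sum_(j in B | j != i) w i * w j <= (1 - rho) ^+ 2 * f%:R ^+ 2 /\
   (1 - rho) ^+ 2 * f%:R <= \sum_(i in B) w i ^+ 2 <= (1 - rho) * f%:R).
Proof.
move=> e0 e8 hn hB w01 hsum r0 hS.
set S := \sum_(i in B) w i in hS *.
have S0 : 0 <= S by apply: sumr_ge0 => i _; case/andP: (w01 i).
have Bf : (#|B|%:R : R) <= f%:R by rewrite ler_nat.
have f0 : (0 : R) <= f%:R by apply: ler0n.
have hB1 : \sum_(i in B) (1 - w i) = #|B|%:R - S.
  by rewrite sumrB sumr_const.
split.
  move=> G sG cG.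
  have h2f : (2 * f <= n)%N.
    have : 0 <= eps * f%:R by apply: mulr_ge0 => //; lra.
    rewrite -(ler_nat R) natrM hn; lra.
  have hN : (n%:R - 2 * f%:R : R) = #|G|%:R by rewrite cG natrB // natrM.
  rewrite hN.
  case: (posnP f) => [fz|fpos].
    have -> : (#|G|%:R : R) = 0 by rewrite -hN hn fz; ring.
    rewrite mulr0; apply: sumr_ge0 => i _; exact: sqr_ge0.
  have fp : (0 : R) < f%:R by rewrite ltr0n.
  have r1 : rho <= 1.
    have : 0 <= (1 - rho) * f%:R by rewrite -hS.
    rewrite pmulr_lge0 //; lra.
  set m := Num.max (rho / 2) (eps / 8).
  have m1 : rho / 2 <= m by rewrite le_max lexx.
  have m2 : eps / 8 <= m by rewrite le_max lexx orbT.
  have m3 : m <= 1 by rewrite ge_max; apply/andP; split; lra.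
  have hG1 : \sum_(i in G) (1 - w i) <= \sum_(i in ~: B) (1 - w i).
    apply: sub_sum => // i _; case/andP: (w01 i) => _; lra.
  have hG2 : \sum_(i in G) (1 - w i) = #|G|%:R - \sum_(i in G) w i.
    by rewrite sumrB sumr_const.
  have hGN : (#|G|%:R : R) = (2 + eps) * f%:R by rewrite -hN hn; ring.
  have p1 : 0 <= (m - rho / 2) * f%:R by apply: mulr_ge0 => //; lra.
  have p2 : 0 <= (m - eps / 8) * eps * f%:R.
    by apply: mulr_ge0 => //; apply: mulr_ge0; lra.
  have hT : (1 - m) * #|G|%:R <= \sum_(i in G) w i.
    rewrite hGN; lra.
  have := @sq_lb _ _ G w (1 - m).
  have : 0 <= (1 - m) * (\sum_(i in G) w i - (1 - m) * #|G|%:R).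
    by apply: mulr_ge0; lra.
  lra.
split.
  have hi : forall i, \sum_(j in B | j != i) w i * w j <= w i * S.
    move=> i; rewrite -mulr_sumr; apply: ler_wpM2l; first by case/andP: (w01 i).
    rewrite /S big_mkcondr /=; apply: ler_sum => j _.
    case: (j != i) => //; by case/andP: (w01 j).
  apply: le_trans (ler_sum _ (fun i _ => hi i)) _.
  rewrite -mulr_suml -/S hS; lra.
apply/andP; split.
  have := @sq_lb _ _ B w (1 - rho).
  have : 0 <= (1 - rho) ^+ 2 * (f%:R - #|B|%:R).
    apply: mulr_ge0; [exact: sqr_ge0 | lra].
  rewrite -/S hS; lra.
rewrite -hS; apply: ler_sum => i _; case/andP: (w01 i) => a b; nra.
Qed.
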